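(* The set of points of exact period $5$ under $G$ lies on the curve $P_5(u,v)=0$, where \begin{align*} P_5(u,v)={}&-3u^5v^6+3u^4v^2-u^7v^2+uv^3-u^6v-u^5v+2u^3v-4u^3v^2-2uv^4+2u^4v\\ &+6u^2v^4+2u^7v^3-u^7v^4+u^4v^7+v^5+v^7+u^6v^2+6u^2v^7+2v^6+3u^6v^5\\ &+u^3+4uv^7+4u^3v^7-12u^4v^6+14u^5v^5-8u^6v^4-16u^3v^6-5u^5v^3-12u^5v^4\\ &+5u^6v^3+18u^4v^5+19u^3v^4-6u^2v^6+3uv^6+6u^4v^4-16u^4v^3+7u^5v^2\\ &-4uv^5-12u^2v^5-5u^3v^3-2u^2v^2+4u^2v^3, \end{align*} and the Zariski closure in $\mathbb{C}^2$ of this set is this curve (this is the equation of period five orbits on the $(u,v)$-plane).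
   Context: Let \[ G(u,v)=\left(\frac{-u+v+uv}{u},\ \frac{u^{2}-u+v-u^{2}v-uv+uv^{2}+v^{2}}{u}\right), \] defined for $(u,v)\in\mathbb{C}^2$ with $u\neq 0$. A point $(u,v)$ has exact period $n$ under $G$ if the iterates $G^k(u,v)$, $0\le k\le n-1$, all have nonzero first coordinate, $G^n(u,v)=(u,v)$, and $G^k(u,v)\neq(u,v)$ for $0<k<n$. *)

(* Defs.v *)
From HB Require Import structures.
From mathcomp Require Import all_boot all_order all_algebra.
From mathcomp Require Import complex.
From mathcomp Require Import Rstruct.
Set Implicit Arguments. Unset Strict Implicit. Unset Printing Implicit Defensive.
Import Order.TTheory GRing.Theory Num.Theory.
Local Open Scope ring_scope.

Definition CC : Type := complex Stdlib.Reals.Rdefinitions.R.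

(* The map G; outside u <> 0 the value is a junk value (x/0 = 0 in MathComp),
   never used since exact_period requires nonzero first coordinates. *)
Definition G (p : CC * CC) : CC * CC :=
  let u := p.1 in let v := p.2 in
  ((- u + v + u * v) / u,
   (u ^+ 2 - u + v - u ^+ 2 * v - u * v + u * v ^+ 2 + v ^+ 2) / u).

Definition exact_period (n : nat) (p : CC * CC) : Prop :=
  (forall k, (k < n)%N -> (iter k G p).1 != 0) /\
  iter n G p = p /\
  (forall k, (0 < k < n)%N -> iter k G p <> p).

Definition P5 (u v : CC) : CC :=
  - 3 * u^+5 * v^+6 + 3 * u^+4 * v^+2 - u^+7 * v^+2 + u * v^+3 - u^+6 * v
  - u^+5 * v + 2 * u^+3 * v - 4 * u^+3 * v^+2 - 2 * u * v^+4 + 2 * u^+4 * v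
  + 6 * u^+2 * v^+4 + 2 * u^+7 * v^+3 - u^+7 * v^+4 + u^+4 * v^+7 + v^+5 + v^+7
  + u^+6 * v^+2 + 6 * u^+2 * v^+7 + 2 * v^+6 + 3 * u^+6 * v^+5
  + u^+3 + 4 * u * v^+7 + 4 * u^+3 * v^+7 - 12 * u^+4 * v^+6 + 14 * u^+5 * v^+5
  - 8 * u^+6 * v^+4 - 16 * u^+3 * v^+6 - 5 * u^+5 * v^+3 - 12 * u^+5 * v^+4
  + 5 * u^+6 * v^+3 + 18 * u^+4 * v^+5 + 19 * u^+3 * v^+4 - 6 * u^+2 * v^+6
  + 3 * u * v^+6 + 6 * u^+4 * v^+4 - 16 * u^+4 * v^+3 + 7 * u^+5 * v^+2
  - 4 * u * v^+5 - 12 * u^+2 * v^+5 - 5 * u^+3 * v^+3 - 2 * u^+2 * v^+2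
  + 4 * u^+2 * v^+3.

(* Bivariate polynomials over CC, as {poly {poly CC}}: the inner variable is u,
   the outer variable is v. *)
Definition eval2 (q : {poly {poly CC}}) (p : CC * CC) : CC :=
  (q.[p.2%:P]).[p.1].

Definition zariski_closure (S : CC * CC -> Prop) (x : CC * CC) : Prop :=
  forall q : {poly {poly CC}},
    (forall s, S s -> eval2 q s = 0) -> eval2 q x = 0.

(* Main.v *)
From HB Require Import structures.
From mathcomp Require Import all_boot all_order all_algebra.
From mathcomp Require Import complex.
From mathcomp Require Import Rstruct.
From mathcomp Require Import ring.
Require Import Defs.
Import Order.TTheory GRing.Theory Num.Theory.
Local Open Scope ring_scope.
Set Implicit Arguments. Unset Strict Implicit.

Definition Pab (a b : CC) : CC := (b^+6 + 2*b^+7 + b^+8 + a*b^+4 + 3*a*b^+5 + 8*a*b^+6 + 10*a*b^+7 + 4*a*b^+8 + a^+2*b^+3 + 6*a^+2*b^+4 + 16*a^+2*b^+5 + 27*a^+2*b^+6 + 22*a^+2*b^+7 + 6*a^+2*b^+8 + a^+3*b^+2 + 6*a^+3*b^+3 + 19*a^+3*b^+4 + 39*a^+3*b^+5 + 48*a^+3*b^+6 + 26*a^+3*b^+7 + 4*a^+3*b^+8 + a^+4*b + 3*a^+4*b^+2 + 14*a^+4*b^+3 + 35*a^+4*b^+4 + 56*a^+4*b^+5 + 48*a^+4*b^+6 + 16*a^+4*b^+7 + a^+4*b^+8 + a^+5 + a^+5*b + 6*a^+5*b^+2 + 19*a^+5*b^+3 + 39*a^+5*b^+4 + 48*a^+5*b^+5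 + 26*a^+5*b^+6 + 4*a^+5*b^+7 + a^+6*b + 6*a^+6*b^+2 + 16*a^+6*b^+3 + 27*a^+6*b^+4 + 22*a^+6*b^+5 + 6*a^+6*b^+6 + a^+7*b + 3*a^+7*b^+2 + 8*a^+7*b^+3 + 10*a^+7*b^+4 + 4*a^+7*b^+5 + a^+8*b^+2 + 2*a^+8*b^+3 + a^+8*b^+4).
Definition Q3 (a b : CC) : CC := (b^+7 + 3*b^+8 + 3*b^+9 + b^+10 + a*b^+5 + 4*a*b^+6 + 13*a*b^+7 + 23*a*b^+8 + 18*a*b^+9 + 5*a*b^+10 + a^+2*b^+4 + 9*a^+2*b^+5 + 30*a^+2*b^+6 + 65*a^+2*b^+7 + 80*a^+2*b^+8 + 47*a^+2*b^+9 + 10*a^+2*b^+10 + a^+3*b^+2 + 2*a^+3*b^+3 + 10*a^+3*b^+4 + 42*a^+3*b^+5 + 107*a^+3*b^+6 + 175*a^+3*b^+7 + 159*a^+3*b^+8 + 68*a^+3*b^+9 + 10*a^+3*b^+10 - a^+4*b + 2*a^+4*b^+2 + 8*a^+4*b^+3 + 37*a^+4*b^+4 + 115*a^+4*b^+5 + 231*a^+4*b^+6 + 288*a^+4*b^+7 + 192*a^+4*b^+8 + 57*a^+4*b^+9 + 5*a^+4*b^+10 - a^+5*b + 4*a^+5*b^+2 + 21*a^+5*b^+3 + 81*a^+5*b^+4 + 200*a^+5*b^+5 + 321*a^+5*b^+6 + 300*a^+5*b^+7 + 140*a^+5*b^+8 + 26*a^+5*b^+9 + a^+5*b^+10 - a^+6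 + 7*a^+6*b^+2 + 37*a^+6*b^+3 + 115*a^+6*b^+4 + 231*a^+6*b^+5 + 288*a^+6*b^+6 + 192*a^+6*b^+7 + 57*a^+6*b^+8 + 5*a^+6*b^+9 + a^+7*b + 10*a^+7*b^+2 + 42*a^+7*b^+3 + 107*a^+7*b^+4 + 175*a^+7*b^+5 + 159*a^+7*b^+6 + 68*a^+7*b^+7 + 10*a^+7*b^+8 + a^+8*b + 9*a^+8*b^+2 + 30*a^+8*b^+3 + 65*a^+8*b^+4 + 80*a^+8*b^+5 + 47*a^+8*b^+6 + 10*a^+8*b^+7 + a^+9*b + 4*a^+9*b^+2 + 13*a^+9*b^+3 + 23*a^+9*b^+4 + 18*a^+9*b^+5 + 5*a^+9*b^+6 + a^+10*b^+2 + 3*a^+10*b^+3 + 3*a^+10*b^+4 + a^+10*b^+5).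
Definition Q4 (a b : CC) : CC := (b^+6 + 2*b^+7 + b^+8 + a*b^+4 + 3*a*b^+5 + 8*a*b^+6 + 10*a*b^+7 + 4*a*b^+8 - a^+2*b^+3 + 4*a^+2*b^+4 + 16*a^+2*b^+5 + 27*a^+2*b^+6 + 22*a^+2*b^+7 + 6*a^+2*b^+8 - a^+3*b - a^+3*b^+2 + 15*a^+3*b^+4 + 39*a^+3*b^+5 + 48*a^+3*b^+6 + 26*a^+3*b^+7 + 4*a^+3*b^+8 + a^+4 - a^+4*b - 3*a^+4*b^+2 + 6*a^+4*b^+3 + 33*a^+4*b^+4 + 56*a^+4*b^+5 + 48*a^+4*b^+6 + 16*a^+4*b^+7 + a^+4*b^+8 - a^+5*b + 15*a^+5*b^+3 + 39*a^+5*b^+4 + 48*a^+5*b^+5 + 26*a^+5*b^+6 + 4*a^+5*b^+7 - a^+6*b + 4*a^+6*b^+2 + 16*a^+6*b^+3 + 27*a^+6*b^+4 + 22*a^+6*b^+5 + 6*a^+6*b^+6 + a^+7*b + 3*a^+7*b^+2 + 8*a^+7*b^+3 + 10*a^+7*b^+4 + 4*a^+7*b^+5 + a^+8*b^+2 + 2*a^+8*b^+3 + a^+8*b^+4).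
Definition Al (a b : CC) : CC := (- 3*b^+6 - 5*b^+7 - 2*b^+8 - 3*a*b^+4 - 8*a*b^+5 - 21*a*b^+6 - 23*a*b^+7 - 7*a*b^+8 + 3*a^+2*b^+3 - 12*a^+2*b^+4 - 41*a^+2*b^+5 - 65*a^+2*b^+6 - 45*a^+2*b^+7 - 8*a^+2*b^+8 + 3*a^+3*b + 2*a^+3*b^+2 - a^+3*b^+3 - 42*a^+3*b^+4 - 95*a^+3*b^+5 - 106*a^+3*b^+6 - 44*a^+3*b^+7 - 2*a^+3*b^+8 - 3*a^+4 + 3*a^+4*b + 7*a^+4*b^+2 - 19*a^+4*b^+3 - 86*a^+4*b^+4 - 129*a^+4*b^+5 - 93*a^+4*b^+6 - 17*a^+4*b^+7 + 2*a^+4*b^+8 + a^+5 + 3*a^+5*b - 3*a^+5*b^+2 - 42*a^+5*b^+3 - 95*a^+5*b^+4 - 102*a^+5*b^+5 - 38*a^+5*b^+6 + 3*a^+5*b^+7 + a^+5*b^+8 - a^+6 + 3*a^+6*b - 13*a^+6*b^+2 - 42*a^+6*b^+3 - 62*a^+6*b^+4 - 39*a^+6*b^+5 - a^+6*b^+6 + 3*a^+6*b^+7 - 4*a^+7*b - 8*a^+7*b^+2 - 20*a^+7*b^+3 - 21*a^+7*b^+4 - 3*a^+7*b^+5 + 3*a^+7*b^+6 - 3*a^+8*b^+2 - 5*a^+8*b^+3 - a^+8*b^+4 + a^+8*b^+5).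
Definition Be (a b : CC) : CC := (3*b^+7 + 8*b^+8 + 7*b^+9 + 2*b^+10 + 3*a*b^+5 + 11*a*b^+6 + 35*a*b^+7 + 57*a*b^+8 + 39*a*b^+9 + 9*a*b^+10 + 3*a^+2*b^+4 + 25*a^+2*b^+5 + 79*a^+2*b^+6 + 164*a^+2*b^+7 + 184*a^+2*b^+8 + 92*a^+2*b^+9 + 15*a^+2*b^+10 + 3*a^+3*b^+2 + 5*a^+3*b^+3 + 28*a^+3*b^+4 + 111*a^+3*b^+5 + 270*a^+3*b^+6 + 416*a^+3*b^+7 + 335*a^+3*b^+8 + 114*a^+3*b^+9 + 10*a^+3*b^+10 - 3*a^+4*b + 6*a^+4*b^+2 + 20*a^+4*b^+3 + 99*a^+4*b^+4 + 293*a^+4*b^+5 + 559*a^+4*b^+6 + 639*a^+4*b^+7 + 357*a^+4*b^+8 + 71*a^+4*b^+9 - 2*a^+5*b + 12*a^+5*b^+2 + 56*a^+5*b^+3 + 211*a^+5*b^+4 + 493*a^+5*b^+5 + 740*a^+5*b^+6 + 605*a^+5*b^+7 + 208*a^+5*b^+8 + 11*a^+5*b^+9 - 3*a^+5*b^+10 - 3*a^+6 + a^+6*b + 21*a^+6*b^+2 + 101*a^+6*b^+3 + 293*a^+6*b^+4 + 551*a^+6*b^+5 + 620*a^+6*b^+6 + 328*a^+6*b^+7 + 45*a^+6*b^+8 - 10*a^+6*b^+9 - a^+6*b^+10 + a^+7 + 4*a^+7*b + 31*a^+7*b^+2 + 114*a^+7*b^+3 + 266*a^+7*b^+4 + 400*a^+7*b^+5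 + 304*a^+7*b^+6 + 76*a^+7*b^+7 - 12*a^+7*b^+8 - 4*a^+7*b^+9 + a^+8 + 4*a^+8*b + 28*a^+8*b^+2 + 80*a^+8*b^+3 + 158*a^+8*b^+4 + 169*a^+8*b^+5 + 67*a^+8*b^+6 - 6*a^+8*b^+7 - 6*a^+8*b^+8 + 4*a^+9*b + 12*a^+9*b^+2 + 34*a^+9*b^+3 + 54*a^+9*b^+4 + 31*a^+9*b^+5 - a^+9*b^+6 - 4*a^+9*b^+7 + 3*a^+10*b^+2 + 8*a^+10*b^+3 + 6*a^+10*b^+4 - a^+10*b^+6).
Definition Kinv (a b : CC) : CC := (b^+10 + 2*b^+11 + b^+12 + a*b^+8 + 3*a*b^+9 + 8*a*b^+10 + 10*a*b^+11 + 4*a*b^+12 + a^+2*b^+7 + 6*a^+2*b^+8 + 16*a^+2*b^+9 + 27*a^+2*b^+10 + 22*a^+2*b^+11 + 6*a^+2*b^+12 + a^+3*b^+5 + a^+3*b^+6 + 6*a^+3*b^+7 + 19*a^+3*b^+8 + 39*a^+3*b^+9 + 48*a^+3*b^+10 + 26*a^+3*b^+11 + 4*a^+3*b^+12 + a^+4*b^+5 + 3*a^+4*b^+6 + 14*a^+4*b^+7 + 35*a^+4*b^+8 + 56*a^+4*b^+9 + 48*a^+4*b^+10 + 16*a^+4*b^+11 + a^+4*b^+12 + a^+5*b^+5 + 6*a^+5*b^+6 + 19*a^+5*b^+7 + 39*a^+5*b^+8 + 48*a^+5*b^+9 + 26*a^+5*b^+10 + 4*a^+5*b^+11 + a^+6*b^+5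 + 6*a^+6*b^+6 + 16*a^+6*b^+7 + 27*a^+6*b^+8 + 22*a^+6*b^+9 + 6*a^+6*b^+10 + a^+7*b^+5 + 3*a^+7*b^+6 + 8*a^+7*b^+7 + 10*a^+7*b^+8 + 4*a^+7*b^+9 + a^+8*b^+6 + 2*a^+8*b^+7 + a^+8*b^+8).
Definition n2 (a b : CC) : CC := b + a^+2 + a*b.
Definition D3 (a b : CC) : CC := b + b^+2 + 2*a*b + a*b^+2 + a^+2 + a^+2*b.
Definition nx (x y : CC) : CC := y * (y + x^+2 + x*y) / x.

Fixpoint tp (a b : CC) (k : nat) : CC * CC :=
  match k with 0 => (a, b) | k'.+1 => let p := tp a b k' in (p.2, nx p.1 p.2) end.
Definition ts a b k := (tp a b k).1.

Lemma ts_SS a b k : ts a b k.+2 = nx (ts a b k) (ts a b k.+1).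
Proof. by []. Qed.
Lemma ts0 a b : ts a b 0 = a. Proof. by []. Qed.
Lemma ts1 a b : ts a b 1 = b. Proof. by []. Qed.

Lemma cert (a b : CC) : Al a b * Q3 a b + Be a b * Q4 a b = 2 * a^+12.
Proof. rewrite /Al /Be /Q3 /Q4. ring. Qed.

Lemma L_P5 (u a : CC) : P5 u (u*(1+a)) * a^+5 = u^+3 * Pab a (u*a).
Proof. rewrite /P5 /Pab. ring. Qed.

Lemma L_inv_id (x y : CC) : x != 0 -> Pab y (nx x y) * x^+8 = Pab x y * Kinv x y.
Proof. move=> hx. rewrite /Pab /Kinv /nx. field. by []. Qed.

Lemma Pab_y0 y : Pab y 0 = y^+5.
Proof. rewrite /Pab. ring. Qed.

Lemma L_inv (x y : CC) : x != 0 -> y != 0 -> Pab x y = 0 ->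
  nx x y != 0 /\ Pab y (nx x y) = 0.
Proof.
move=> hx hy hP.
have h1 : Pab y (nx x y) = 0.
  have := @L_inv_id x y hx; rewrite hP mul0r => /eqP.
  by rewrite mulf_eq0 expf_eq0 (negbTE hx) andbF orbF => /eqP.
split=> //; apply/negP => /eqP h0.
by move: h1; rewrite h0 Pab_y0 => /eqP; rewrite expf_eq0 (negbTE hy) andbF.
Qed.

Lemma nx_n2 a b : nx a b = b * n2 a b / a.
Proof. by rewrite /nx /n2. Qed.

Lemma nx_D3 a b : a != 0 -> b != 0 -> nx b (nx a b) = nx a b * D3 a b / a.
Proof. move=> ha hb. rewrite /nx /D3. field. by rewrite ha hb. Qed.

Lemma L_t5 (a b : CC) : a != 0 -> b != 0 -> n2 a b != 0 -> D3 a b != 0 ->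
  nx (nx b (nx a b)) (nx (nx a b) (nx b (nx a b))) - a
   = Pab a b * Q3 a b / (a^+8 * D3 a b).
Proof.
move=> ha hb hn hd. rewrite /nx /Pab /Q3.
move: hn hd; rewrite /n2 /D3 => hn hd.
field. rewrite hd ha hb hn /=.
rewrite (_ : b * (b + a ^+ 2 + a * b) + b ^+ 2 * a + b * (b * (b + a ^+ 2 + a * b))
   = b * (b + b ^+ 2 + 2 * a * b + a * b ^+ 2 + a ^+ 2 + a ^+ 2 * b)); last by ring.
by rewrite mulf_neq0.
Qed.

Lemma L_e4 (a b : CC) : a != 0 -> b != 0 -> n2 a b != 0 ->
  let t4 := nx (nx a b) (nx b (nx a b)) in
  a * (a + t4^+2 + t4*a) - b * t4 = Pab a b * Q4 a b / a^+7.
Proof.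
move=> ha hb hn /=. rewrite /nx /Pab /Q4.
move: hn; rewrite /n2 => hn.
field. by rewrite ha hb hn.
Qed.

Lemma G_t (x y : CC) : x != 0 -> y != 0 ->
  G (y / x, y / x * (1 + x)) = (nx x y / y, nx x y / y * (1 + y)).
Proof.
move=> hx hy. rewrite /G /nx /=. congr pair; field; by rewrite ?hx ?hy.
Qed.

Lemma iter_t (a b : CC) k : (forall j, (j <= k)%N -> ts a b j != 0) ->
  iter k G (b / a, b / a * (1 + a)) =
  (ts a b k.+1 / ts a b k, ts a b k.+1 / ts a b k * (1 + ts a b k)).
Proof.
elim: k => [|k IH] H; first by [].
rewrite iterS IH; last by move=> j hj; apply: H; apply: leqW.
rewrite G_t ?H // ts_SS //.
Qed.

Lemma pt_ab (u v : CC) : u != 0 -> v != u ->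
  ((v - u) / ((v - u) / u), (v - u) / ((v - u) / u) * (1 + (v - u) / u)) = (u, v).
Proof.
move=> hu hv. have hvu : v - u != 0 by rewrite subr_eq0.
congr pair; field; by rewrite ?hu ?hvu.
Qed.

Lemma G_fix (u : CC) : u != 0 -> G (u, u) = (u, u).
Proof. move=> hu. rewrite /G /=. congr pair; field; by rewrite hu. Qed.

Lemma iter_mulP (T : Type) (f : T -> T) x k m : iter k f x = x -> iter (k * m) f x = x.
Proof.
move=> h; elim: m => [|m IH]; first by rewrite muln0.
by rewrite mulnS iterD IH h.
Qed.

Lemma period5 (T : Type) (f : T -> T) x : iter 5 f x = x -> f x <> x ->
  forall k, (0 < k < 5)%N -> iter k f x <> x.
Proof.
move=> h5 h1 k /andP [hk0 hk5] hk.
have H16 : iter 16 f x = f x.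
  by rewrite (iterD 1%N 15%N) (@iter_mulP _ f x 5%N 3%N h5).
have H6 : iter 6 f x = f x by rewrite (iterD 1%N 5%N) h5.
case: k hk0 hk5 hk => [|[|[|[|[|k]]]]] // _ _ hk.
- by apply: h1; rewrite -H6 (@iter_mulP _ f x 2%N 3%N hk).
- by apply: h1; rewrite -H6 (@iter_mulP _ f x 3%N 2%N hk).
- by apply: h1; rewrite -H16 (@iter_mulP _ f x 4%N 4%N hk).
Qed.

Lemma two_neq0 : (2 : CC) != 0.
Proof. by rewrite pnatr_eq0. Qed.

Lemma core2_ab (a b : CC) : a != 0 -> b != 0 -> Pab a b = 0 ->
  exact_period 5 (b / a, b / a * (1 + a)).
Proof.
move=> ha hb hP.
have [h2 hP2] := L_inv ha hb hP.
have [h3 hP3] := L_inv hb h2 hP2.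
have [h4 hP4] := L_inv h2 h3 hP3.
have [h5 hP5] := L_inv h3 h4 hP4.
have [h6 hP6] := L_inv h4 h5 hP5.
have hn : n2 a b != 0.
  by apply: contraNneq h2 => e; rewrite nx_n2 e mulr0 mul0r.
have hd : D3 a b != 0.
  by apply: contraNneq h3 => e; rewrite nx_D3 // e mulr0 mul0r.
have e5 : nx (nx b (nx a b)) (nx (nx a b) (nx b (nx a b))) = a.
  by apply/eqP; rewrite -subr_eq0 L_t5 // hP !mul0r.
have e6 : nx (nx (nx a b) (nx b (nx a b))) a = b.
  have := L_e4 ha hb hn; rewrite /= hP !mul0r => /eqP; rewrite subr_eq0 => /eqP E.
  move: E h4; set t4 := nx (nx a b) (nx b (nx a b)) => E h4.
  by rewrite {1}/nx E mulfK.
have Hts : forall j, (j <= 6)%N -> ts a b j != 0.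
  by case=> [|[|[|[|[|[|[|j]]]]]]] // _; rewrite ?ts_SS ?ts0 ?ts1.
have Hit : forall k, (k <= 5)%N -> iter k G (b / a, b / a * (1 + a)) =
  (ts a b k.+1 / ts a b k, ts a b k.+1 / ts a b k * (1 + ts a b k)).
  move=> k hk; apply: iter_t => j hj; apply: Hts; apply: leq_trans hj _.
  by apply: leq_trans hk _.
have T5 : ts a b 5 = a by rewrite !ts_SS ts0 ts1 e5.
have T6 : ts a b 6 = b by rewrite !ts_SS ts0 ts1 e5 e6.
have HP5 : iter 5 G (b / a, b / a * (1 + a)) = (b / a, b / a * (1 + a)).
  by rewrite Hit // T5 T6.
split; last split => //.
- move=> k hk; rewrite Hit; last by apply: ltnW.
  have h1 : (k.+1 <= 6)%N by apply: leq_trans hk _.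
  have h0 : (k <= 6)%N by apply: ltnW.
  by rewrite /= mulf_neq0 ?invr_neq0 ?Hts.
- apply: period5 => //.
  move=> E.
  have := Hit 1%N isT; rewrite /= E => [[E1' E2']].
  move: E1' E2'; rewrite /ts /= => E1' E2'.
  have hba : b / a != 0 by rewrite mulf_neq0 ?invr_neq0.
  have Eab : a = b.
    move: E2'; rewrite -E1' => /(mulfI hba) /addrI ->; done.
  move: E1'; rewrite /nx -Eab => /eqP.
  rewrite -subr_eq0.
  have -> : a / a - a * (a + a ^+ 2 + a * a) / a / a = - ((2 : CC) * a).
    by field.
  rewrite oppr_eq0.
  by rewrite mulf_eq0 (negbTE two_neq0) (negbTE ha).
Qed.

Lemma ab_rel (u v : CC) : u != 0 ->
  u * (1 + (v - u) / u) = v /\ u * ((v - u) / u) = v - u.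
Proof. move=> hu; split; field; by rewrite hu. Qed.

Lemma P5_Pab (u v : CC) : u != 0 -> v != u ->
  (P5 u v = 0 <-> Pab ((v - u) / u) (v - u) = 0).
Proof.
move=> hu hv.
have ha : (v - u) / u != 0 by rewrite mulf_neq0 ?invr_neq0 ?subr_eq0.
have := L_P5 u ((v - u) / u); have [-> ->] := ab_rel v hu => E.
split=> h.
- by move: E; rewrite h mul0r => /esym /eqP; rewrite mulf_eq0 expf_eq0 (negbTE hu) andbF /= => /eqP.
- by move: E; rewrite h mulr0 => /eqP; rewrite mulf_eq0 expf_eq0 (negbTE ha) andbF orbF => /eqP.
Qed.

Lemma core2 (u v : CC) : u != 0 -> v != u -> P5 u v = 0 -> exact_period 5 (u, v).
Proof.
move=> hu hv hP.
have hb : v - u != 0 by rewrite subr_eq0.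
have ha : (v - u) / u != 0 by rewrite mulf_neq0 ?invr_neq0.
rewrite -(pt_ab hu hv); apply: core2_ab => //.
by apply/(P5_Pab hu hv).
Qed.

Lemma core1 (u v : CC) : exact_period 5 (u, v) -> P5 u v = 0.
Proof.
move=> [H1 [H5 Hn]].
have hu : u != 0 by have := H1 0%N isT.
have hv : v != u.
  apply/eqP => e; apply: (Hn 1%N isT); rewrite e /=; exact: G_fix.
apply/(P5_Pab hu hv).
set a := (v - u) / u; set b := v - u.
have hb : b != 0 by rewrite subr_eq0.
have ha : a != 0 by rewrite mulf_neq0 ?invr_neq0.
move: H1 H5; rewrite -(pt_ab hu hv) -/a -/b => H1 H5.
have Hf : forall k, (k <= 5)%N -> (iter k G (b / a, b / a * (1 + a))).1 != 0.
  move=> k; rewrite leq_eqVlt => /orP [/eqP -> | hk]; last exact: H1.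
  by rewrite H5 /= mulf_neq0 ?invr_neq0.
have step : forall k, (k <= 4)%N -> (forall j, (j <= k.+1)%N -> ts a b j != 0) ->
   ts a b k.+2 != 0.
  move=> k hk H.
  have := Hf k.+1 hk; rewrite (iter_t H) /=.
  by apply: contraNneq => ->; rewrite mul0r.
have upto : forall k, (forall j, (j <= k)%N -> ts a b j != 0) -> ts a b k.+1 != 0 ->
    forall j, (j <= k.+1)%N -> ts a b j != 0.
  move=> k H Hk j; rewrite leq_eqVlt => /orP [/eqP -> // | ]; exact: H.
have A1 : forall j, (j <= 1)%N -> ts a b j != 0 by case=> [|[|j]].
have A2 := upto _ A1 (step 0%N isT A1).
have A3 := upto _ A2 (step 1%N isT A2).
have A4 := upto _ A3 (step 2%N isT A3).
have A5 := upto _ A4 (step 3%N isT A4).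
have A6 := upto _ A5 (step 4%N isT A5).
have := H5; rewrite (iter_t A5) => -[E1 E2].
have hba : b / a != 0 by rewrite mulf_neq0 ?invr_neq0.
have T5 : ts a b 5 = a.
  by move: E2; rewrite E1 => /(mulfI hba) /addrI.
have T6 : ts a b 6 = b.
  move: E1; rewrite T5 => /(mulIf (invr_neq0 ha)); done.
have h2 : ts a b 2 != 0 by apply: A6.
have h3 : ts a b 3 != 0 by apply: A6.
have h4 : ts a b 4 != 0 by apply: A6.
move: T5 T6 h2 h3 h4; rewrite !ts_SS ts0 ts1 => T5 T6 h2 h3 h4.
have hn : n2 a b != 0.
  by apply: contraNneq h2 => e; rewrite nx_n2 e mulr0 mul0r.
have hd : D3 a b != 0.
  by apply: contraNneq h3 => e; rewrite nx_D3 // e mulr0 mul0r.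
have Z3 : Pab a b * Q3 a b = 0.
  have := L_t5 ha hb hn hd; rewrite T5 subrr => /esym /eqP.
  have hden : a^+8 * D3 a b != 0 by rewrite mulf_neq0 ?expf_neq0.
  by rewrite mulf_eq0 invr_eq0 (negbTE hden) orbF => /eqP.
have Z4 : Pab a b * Q4 a b = 0.
  have := L_e4 ha hb hn; rewrite /=.
  move: T6 h4; set t4 := nx (nx a b) (nx b (nx a b)) => T6 h4.
  rewrite T5 in T6.
  have -> : a * (a + t4 ^+ 2 + t4 * a) = b * t4.
    by rewrite -T6 /nx mulfVK.
  rewrite subrr => /esym /eqP.
  have hden : a^+7 != 0 by rewrite expf_neq0.
  by rewrite mulf_eq0 invr_eq0 (negbTE hden) orbF => /eqP.
apply/eqP; apply: contraT => hP.
have q3 : Q3 a b = 0 by apply/eqP; move: Z3 => /eqP; rewrite mulf_eq0 (negbTE hP).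
have q4 : Q4 a b = 0 by apply/eqP; move: Z4 => /eqP; rewrite mulf_eq0 (negbTE hP).
have := cert a b; rewrite q3 q4 !mulr0 addr0 => /esym /eqP.
by rewrite mulf_eq0 (negbTE two_neq0) expf_eq0 (negbTE ha) andbF.
Qed.

Definition cont_at (f : CC -> CC -> CC) (u v : CC) :=
  forall e : CC, 0 < e -> exists d : CC, 0 < d /\
    forall x y, `|x - u| < d -> `|y - v| < d -> `|f x y - f u v| < e.

Lemma minpos (a b : CC) : 0 < a -> 0 < b -> exists c : CC, [/\ 0 < c, c <= a & c <= b].
Proof.
move=> ha hb.
have := real_leVge (gtr0_real ha) (gtr0_real hb); case/orP => h.
- by exists a; rewrite ha h lexx.
- by exists b; rewrite hb h lexx.
Qed.

Lemma cont_ext f g u v : (forall x y, f x y = g x y) -> cont_at f u v -> cont_at g u v.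
Proof.
move=> E H e he; have [d [hd Hd]] := H e he; exists d; split=> // x y hx hy.
by rewrite -!E; apply: Hd.
Qed.

Lemma cont_const c u v : cont_at (fun _ _ => c) u v.
Proof. by move=> e he; exists 1; split=> // x y _ _; rewrite subrr normr0. Qed.

Lemma cont_x u v : cont_at (fun x _ => x) u v.
Proof. by move=> e he; exists e; split=> // x y hx _. Qed.

Lemma cont_y u v : cont_at (fun _ y => y) u v.
Proof. by move=> e he; exists e; split=> // x y _ hy. Qed.

Lemma cont_add f g u v : cont_at f u v -> cont_at g u v ->
  cont_at (fun x y => f x y + g x y) u v.
Proof.
move=> Hf Hg e he.
have he2 : 0 < e / 2 by rewrite divr_gt0.
have [d1 [hd1 H1]] := Hf _ he2; have [d2 [hd2 H2]] := Hg _ he2.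
have [d [hd hdd1 hdd2]] := minpos hd1 hd2.
exists d; split=> // x y hx hy.
have hx1 := lt_le_trans hx hdd1; have hy1 := lt_le_trans hy hdd1.
have hx2 := lt_le_trans hx hdd2; have hy2 := lt_le_trans hy hdd2.
rewrite (_ : f x y + g x y - (f u v + g u v) = (f x y - f u v) + (g x y - g u v)); last by ring.
apply: le_lt_trans (ler_normD _ _) _.
rewrite (_ : e = e / 2 + e / 2); last by field.
by apply: ltrD; [apply: H1 | apply: H2].
Qed.

Lemma cont_mul f g u v : cont_at f u v -> cont_at g u v ->
  cont_at (fun x y => f x y * g x y) u v.
Proof.
move=> Hf Hg e he.
set M := 1 + `|f u v| + `|g u v|.
have hM : 0 < M by rewrite /M -addrA ltr_wpDr // addr_ge0.
have he' : 0 < e / 2 / M by rewrite !divr_gt0.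
have [e1 [he1 he1a he1b]] := minpos ltr01 he'.
have [d1 [hd1 H1]] := Hf _ he1; have [d2 [hd2 H2]] := Hg _ he1.
have [d [hd hdd1 hdd2]] := minpos hd1 hd2.
exists d; split=> // x y hx hy.
have A1 := H1 x y (lt_le_trans hx hdd1) (lt_le_trans hy hdd1).
have A2 := H2 x y (lt_le_trans hx hdd2) (lt_le_trans hy hdd2).
set a := f x y - f u v in A1 *; set b := g x y - g u v in A2 *.
rewrite (_ : f x y * g x y - f u v * g u v = a * b + f u v * b + g u v * a); last first.
  by rewrite /a /b; ring.
apply: le_lt_trans (ler_normD _ _) _.
apply: le_lt_trans (lerD (ler_normD _ _) (lexx _)) _.
rewrite !normrM.
have B1 : `|a| * `|b| <= e1.
  rewrite -[e1]mul1r; apply: ler_pM => //; try exact: normr_ge0.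
  by apply: ltW; apply: lt_le_trans A1 he1a.
  exact: ltW.
have B2 : `|f u v| * `|b| <= `|f u v| * e1 by apply: ler_wpM2l; rewrite ?normr_ge0 ?ltW.
have B3 : `|g u v| * `|a| <= `|g u v| * e1 by apply: ler_wpM2l; rewrite ?normr_ge0 ?ltW.
apply: le_lt_trans (lerD (lerD B1 B2) B3) _.
rewrite (_ : e1 + `|f u v| * e1 + `|g u v| * e1 = e1 * M); last by rewrite /M; ring.
apply: le_lt_trans (_ : e / 2 < e); last first.
  by rewrite ltr_pdivrMr // ltr_pMr // ltr1n.
by rewrite -ler_pdivlMr.
Qed.

Lemma cont_poly1 (c : {poly CC}) u v : cont_at (fun x _ => c.[x]) u v.
Proof.
elim/poly_ind: c => [|c k IH].
  by apply: (@cont_ext (fun _ _ => 0)); [move=> *; rewrite horner0 | apply: cont_const].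
apply: (@cont_ext (fun x y => c.[x] * x + k)).
  by move=> x y; rewrite hornerMXaddC.
by apply: cont_add; [apply: cont_mul; [apply: IH | apply: cont_x] | apply: cont_const].
Qed.

Lemma cont_eval2 (q : {poly {poly CC}}) u v : cont_at (fun x y => eval2 q (x, y)) u v.
Proof.
elim/poly_ind: q => [|q c IH].
  by apply: (@cont_ext (fun _ _ => 0)); [move=> *; rewrite /eval2 /= !horner0 | apply: cont_const].
apply: (@cont_ext (fun x y => eval2 q (x, y) * y + c.[x])).
  by move=> x y; rewrite /eval2 /= hornerMXaddC hornerD hornerM hornerC.
apply: cont_add; last exact: cont_poly1.
by apply: cont_mul; [apply: IH | apply: cont_y].
Qed.
Definition P5g_def (R : comPzRingType) (u v : R) : R :=
  - 3 * u^+5 * v^+6 + 3 * u^+4 * v^+2 - u^+7 * v^+2 + u * v^+3 - u^+6 * v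
  - u^+5 * v + 2 * u^+3 * v - 4 * u^+3 * v^+2 - 2 * u * v^+4 + 2 * u^+4 * v
  + 6 * u^+2 * v^+4 + 2 * u^+7 * v^+3 - u^+7 * v^+4 + u^+4 * v^+7 + v^+5 + v^+7
  + u^+6 * v^+2 + 6 * u^+2 * v^+7 + 2 * v^+6 + 3 * u^+6 * v^+5
  + u^+3 + 4 * u * v^+7 + 4 * u^+3 * v^+7 - 12 * u^+4 * v^+6 + 14 * u^+5 * v^+5
  - 8 * u^+6 * v^+4 - 16 * u^+3 * v^+6 - 5 * u^+5 * v^+3 - 12 * u^+5 * v^+4
  + 5 * u^+6 * v^+3 + 18 * u^+4 * v^+5 + 19 * u^+3 * v^+4 - 6 * u^+2 * v^+6
  + 3 * u * v^+6 + 6 * u^+4 * v^+4 - 16 * u^+4 * v^+3 + 7 * u^+5 * v^+2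
  - 4 * u * v^+5 - 12 * u^+2 * v^+5 - 5 * u^+3 * v^+3 - 2 * u^+2 * v^+2
  + 4 * u^+2 * v^+3.


Definition P5g := locked P5g_def.
Lemma P5gE : P5g = P5g_def. Proof. by rewrite /P5g -lock. Qed.

Lemma P5g_morph (R S : comPzRingType) (f : {rmorphism R -> S}) (u v : R) :
  f (P5g u v) = P5g (f u) (f v).
Proof. rewrite P5gE /P5g_def.
rewrite !(rmorph_nat, rmorphXn, rmorphM, rmorphN, rmorphB, rmorphD).
by [].
Qed.

Definition q5 : {poly {poly CC}} := P5g (('X : {poly CC})%:P) 'X.

Lemma eval2_q5 (x y : CC) : eval2 q5 (x, y) = P5 x y.
Proof.
have E1 : (P5g (('X : {poly CC})%:P) 'X).[y%:P] = P5g ('X : {poly CC}) (y%:P).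
  have := P5g_morph (horner_eval (y%:P)) (('X : {poly CC})%:P) 'X.
  by move=> H; apply: (etrans H); congr P5g; [exact: hornerC | exact: hornerX].
have E2 : (P5g ('X : {poly CC}) (y%:P)).[x] = P5g x y.
  have := P5g_morph (horner_eval x) ('X : {poly CC}) (y%:P).
  by move=> H; apply: (etrans H); congr P5g; [exact: hornerX | exact: hornerC].
by rewrite /eval2 /q5 /= E1 E2 P5gE.
Qed.

Definition cf (i : nat) (x : CC) : CC :=
  match i with
  | 0 => x^+3
  | 1 => 6*x^+2 + 2*x^+3 + 2*x^+4 - x^+5 - x^+6
  | 2 => 12*x + 10*x^+2 + 12*x^+3 - 7*x^+4 - 5*x^+5 + x^+6 - x^+7
  | 3 => 8 + 17*x + 28*x^+2 - 21*x^+3 - 6*x^+4 + 7*x^+5 - 9*x^+6 + 2*x^+7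
  | 4 => 10 + 30*x - 32*x^+2 + 11*x^+3 + 16*x^+4 - 36*x^+5 + 20*x^+6 - x^+7
  | 5 => 13 - 24*x + 38*x^+2 + 8*x^+3 - 82*x^+4 + 86*x^+5 - 11*x^+6
  | 6 => - 6 + 39*x - 22*x^+2 - 112*x^+3 + 208*x^+4 - 51*x^+5
  | 7 => 15 - 36*x - 90*x^+2 + 308*x^+3 - 129*x^+4
  | 8 => - 16 - 40*x + 280*x^+2 - 192*x^+3
  | 9 => - 8 + 144*x - 168*x^+2
  | 10 => 32 - 80*x
  | 11 => - 16
  | _ => 0
  end.

Definition Qp (x : CC) : {poly CC} := \poly_(i < 12) cf i x.

Lemma Qp_eval x w : (Qp x).[w] = P5 (x + 2 * w) w.
Proof.
rewrite /Qp horner_poly.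
rewrite !big_ord_recr big_ord0 /=.
rewrite /P5. ring.
Qed.

Lemma m16_neq0 : (- 16 : CC) != 0.
Proof. by rewrite oppr_eq0 pnatr_eq0. Qed.

Lemma Qp_size x : size (Qp x) = 12%N.
Proof. by rewrite /Qp size_poly_eq //= m16_neq0. Qed.

Lemma Qp_lead x : lead_coef (Qp x) = - 16.
Proof. by rewrite /Qp lead_coef_poly //= m16_neq0. Qed.

Lemma prod_ge (r v : CC) (rs : seq CC) : 0 <= r ->
  (forall z, z \in rs -> r <= `|v - z|) ->
  r ^+ size rs <= \prod_(z <- rs) `|v - z|.
Proof.
move=> hr; elim: rs => [|z rs IH] H; first by rewrite big_nil expr0.
rewrite big_cons /= exprS.
apply: ler_pM => //; first by rewrite exprn_ge0.
  by apply: H; rewrite mem_head.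
by apply: IH => y hy; apply: H; rewrite in_cons hy orbT.
Qed.

Lemma near_root (p : {poly CC}) (v r : CC) : size p = 12%N -> 0 < r ->
  `|p.[v]| < `|lead_coef p| * r ^+ 11 -> exists w, root p w /\ `|w - v| < r.
Proof.
move=> hs hr hlt.
have [rs Hrs] := closed_field_poly_normal p.
have hl : lead_coef p != 0 by rewrite lead_coef_eq0 -size_poly_eq0 hs.
have hsz : size rs = 11%N.
  have := hs; rewrite Hrs size_scale // size_prod_XsubC; by case.
have hpv : `|p.[v]| = `|lead_coef p| * \prod_(z <- rs) `|v - z|.
  rewrite {1}Hrs hornerZ horner_prod normrM normr_prod.
  by congr (_ * _); apply: eq_bigr => z _; rewrite hornerXsubC.
case: (boolP (has (fun w => `|w - v| < r) rs)) => [/hasP [w wr hw] | /hasPn H].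
  exists w; split=> //.
  by rewrite Hrs rootZ // root_prod_XsubC; exact: wr.
have H' : forall z, z \in rs -> r <= `|v - z|.
  move=> z hz; have := H z hz; rewrite distrC => hn.
  by rewrite real_leNgt ?(gtr0_real hr) ?normr_real.
have := prod_ge (ltW hr) H'; rewrite hsz => hge.
have : `|lead_coef p| * r ^+ 11 <= `|p.[v]|.
  by rewrite hpv; apply: ler_wpM2l => //; apply: normr_ge0.
by move=> h; have := lt_le_trans hlt h; rewrite ltxx.
Qed.

Lemma avoid (h : {poly CC}) (x0 r : CC) : h != 0 -> 0 < r ->
  exists x, `|x - x0| < r /\ h.[x] != 0.
Proof.
move=> hh hr.
have hr0 : r != 0 by rewrite gt_eqF.
set s := [seq x0 + r / (i.+2)%:R | i <- iota 0 (size h)].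
case: (boolP (all (root h) s)) => [Hall | /allPn [x xs hx]].
  have hu : uniq s.
    rewrite map_inj_uniq ?iota_uniq // => i j /addrI /(mulfI hr0) /invr_inj /eqP.
    by rewrite eqr_nat => /eqP [].
  by have := max_poly_roots hh Hall hu; rewrite size_map size_iota ltnn.
move: xs hx => /mapP [i _ ->] hx; exists (x0 + r / (i.+2)%:R); split => //.
have hk : 0 < (i.+2)%:R :> CC by rewrite ltr0n.
rewrite addrC addKr ger0_norm; last by rewrite ltW // divr_gt0.
by rewrite ltr_pdivrMr // ltr_pMr // ltr1n.
Qed.

Definition Hp : {poly CC} :=
  'X * ('X - 2%:P) * ('X^3 * (1 - 'X + 'X^2 - 'X^3 + 'X^4)).

Lemma Hp_eval x : Hp.[x] = x * (x - 2) * (x^+3 * (1 - x + x^+2 - x^+3 + x^+4)).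
Proof. by rewrite /Hp !hornerE. Qed.

Lemma Hp_neq0 : Hp != 0.
Proof.
apply/eqP => e; have := Hp_eval 1; rewrite e horner0.
rewrite (_ : 1 * (1 - 2) * (1 ^+ 3 * (1 - 1 + 1 ^+ 2 - 1 ^+ 3 + 1 ^+ 4)) = - 1 :> CC); last by ring.
by move/eqP; rewrite eq_sym oppr_eq0 oner_eq0.
Qed.

Lemma P5_0w w : P5 0 w = w^+5 * (1 + w)^+2.
Proof. rewrite /P5; ring. Qed.

Lemma P5_ww w : P5 w w = w^+3 * (1 + w + w^+2 + w^+3 + w^+4).
Proof. rewrite /P5; ring. Qed.

Lemma goodpt (u v d : CC) : P5 u v = 0 -> 0 < d ->
  exists x y, `|x - u| < d /\ `|y - v| < d /\ exact_period 5 (x, y).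
Proof.
move=> hP hd.
set r := d / 3.
have hr : 0 < r by rewrite divr_gt0.
have he : 0 < 16 * r^+11 by rewrite mulr_gt0 ?exprn_gt0 ?ltr0n.
have [d2 [hd2 Hc]] := cont_eval2 q5 u v he.
have [rho [hrho h1 h2]] := minpos hr hd2.
have [x [hx hH]] := avoid (u - 2 * v) Hp_neq0 hrho.
have hq : `|(Qp x).[v]| < `|lead_coef (Qp x)| * r^+11.
  rewrite Qp_eval Qp_lead normrN (normr_nat _ 16).
  have := Hc (x + 2 * v) v.
  rewrite !eval2_q5 hP subr0; apply.
    rewrite (_ : x + 2 * v - u = x - (u - 2 * v)); last by ring.
    exact: lt_le_trans hx h2.
  by rewrite subrr normr0.
have [w [hw hwv]] := near_root (Qp_size x) hr hq.
have hPw : P5 (x + 2 * w) w = 0 by rewrite -Qp_eval; apply/eqP.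
exists (x + 2 * w), w; split; [|split].
- rewrite (_ : x + 2 * w - u = (x - (u - 2 * v)) + 2 * (w - v)); last by ring.
  apply: le_lt_trans (ler_normD _ _) _.
  rewrite normrM (normr_nat _ 2).
  rewrite (_ : d = r + 2 * r); last by rewrite /r; field.
  apply: ltrD; first exact: lt_le_trans hx h1.
  by rewrite ltr_pM2l // ltr0n.
- apply: lt_trans hwv _.
  by rewrite /r ltr_pdivrMr ?ltr0n // ltr_pMr // ltr1n.
- apply: core2 => //.
  + apply/eqP => e.
    move: hPw; rewrite e P5_0w => /eqP; rewrite mulf_eq0 !expf_eq0 /= => hw0.
    move: hH; rewrite Hp_eval.
    have -> : x = - 2 * w by apply/eqP; rewrite -subr_eq0 -e; apply/eqP; ring.
    case/orP: hw0 => /eqP hz.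
    * by rewrite hz mulr0 !mul0r eqxx.
    * rewrite (_ : - 2 * w - 2 = 2 * (1 + w) * (-1)); last by ring.
      by rewrite hz mulr0 mul0r mulr0 mul0r eqxx.
  + apply/eqP => e.
    move: hPw; rewrite -e P5_ww => /eqP; rewrite mulf_eq0 => hw0.
    move: hH; rewrite Hp_eval.
    have -> : x = - w by apply: (addIr (2 * w)); rewrite -e; ring.
    rewrite (_ : (- w) ^+ 3 * (1 - - w + (- w) ^+ 2 - (- w) ^+ 3 + (- w) ^+ 4)
              = - (w ^+ 3 * (1 + w + w ^+ 2 + w ^+ 3 + w ^+ 4))); last by ring.
    case/orP: hw0 => /eqP hz.
    * by rewrite hz mul0r oppr0 mulr0 eqxx.
    * by rewrite hz mulr0 oppr0 mulr0 eqxx.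
Qed.

Theorem mainTheorem7 :
  (forall u v : CC, exact_period 5 (u, v) -> P5 u v = 0) /\
  (forall u v : CC, zariski_closure (exact_period 5) (u, v) <-> P5 u v = 0).
Proof.
split; first exact: core1.
move=> u v; split.
- move=> Hz; rewrite -eval2_q5; apply: Hz => -[x y] hs.
  by rewrite eval2_q5; apply: core1.
- move=> hP q Hq; apply/eqP; apply: contraT => hc.
  have he : 0 < `|eval2 q (u, v)| by rewrite normr_gt0.
  have [d [hd Hd]] := cont_eval2 q u v he.
  have [x [y [hx [hy hper]]]] := goodpt hP hd.
  have := Hd x y hx hy; rewrite Hq // sub0r normrN.
  by rewrite ltxx.
Qed.
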